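(* Let $P$ be a partition of $\{1,\dots,n+1\}$ and $P'$ a partition of $\{1,\dots,n'+1\}$ ($n,n'\ge 2$). If the groups $Cox({\cal K}(P))$ and $Cox({\cal K}(P'))$ are isomorphic, then the complexes ${\cal K}(P)$ and ${\cal K}(P')$ are isomorphic.
   Context: For a partition $P=(P_1,\dots,P_t)$ of $\{1,\dots,n+1\}$, ${\cal K}(P)$ is the simplicial complex on the vertex set $\{1,\dots,n+1\}\cup\{p_1,\dots,p_t\}$ ($t$ new vertices) whose $n$-faces are the sets $\{y_1,\dots,y_{n+1}\}$ with, for each $i$, $y_i=i$ or $y_i=p_j$ where $i\in P_j$, subject to the $y_i$ being pairwise distinct; its faces are all nonempty subsets of these. For $i\in\{1,\dots,n+1\}$ with $i\in P_j$, let $g_i$ be the permutation of the vertex set of ${\cal K}(P)$ exchanging $i$ and $p_j$ and fixing all other vertices (an automorphism of ${\cal K}(P)$). $Cox({\cal K}(P))$ is the group generated by $g_1,\dots,g_{n+1}$. Complexes are isomorphic if there is a vertex bijection mapping faces exactly onto faces. *)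

(* Defs.v *)
From mathcomp Require Import all_boot all_fingroup.
Set Implicit Arguments. Unset Strict Implicit. Unset Printing Implicit Defensive.

(* A partition P = (P_1,...,P_t) of {1,...,n+1} is encoded by its block
   labelling lab : 'I_(n+1) -> 'I_t, with P_j = lab^-1(j); we require lab to be
   surjective (blocks are nonempty).  Element i of {1..n+1} is ordinal i-1. *)
Definition is_partition_lab (m t : nat) (lab : 'I_m -> 'I_t) : Prop :=
  forall j : 'I_t, exists i : 'I_m, lab i = j.

(* Vertex set of K(P): the original vertices (inl i) and the new vertices
   p_j (inr j). *)
Definition KVert (m t : nat) : finType := ('I_m + 'I_t)%type.

(* For a choice c (c i = true means y_i = p_j with i in P_j, else y_i = i). *)
Definition yvert (m t : nat) (lab : 'I_m -> 'I_t) (c : {ffun 'I_m -> bool})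
  (i : 'I_m) : KVert m t :=
  if c i then inr (lab i) else inl i.

Definition is_facet (m t : nat) (lab : 'I_m -> 'I_t) (S : {set KVert m t}) : bool :=
  [exists c : {ffun 'I_m -> bool},
     injectiveb (yvert lab c) && (S == [set yvert lab c i | i : 'I_m])].

Definition is_face (m t : nat) (lab : 'I_m -> 'I_t) (S : {set KVert m t}) : bool :=
  (S != set0) && [exists F : {set KVert m t}, is_facet lab F && (S \subset F)].

Definition gen (m t : nat) (lab : 'I_m -> 'I_t) (i : 'I_m) : {perm KVert m t} :=
  tperm (inl i) (inr (lab i)).

Definition Cox (m t : nat) (lab : 'I_m -> 'I_t) : {group {perm KVert m t}} :=
  <<[set gen lab i | i : 'I_m]>>%G.

Definition complex_iso (m t m' t' : nat) (lab : 'I_m -> 'I_t) (lab' : 'I_m' -> 'I_t')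
  : Prop :=
  exists f : KVert m t -> KVert m' t',
    bijective f /\ forall S : {set KVert m t}, is_face lab S = is_face lab' (f @: S).

(* Main.v *)
Require Import Defs.
From mathcomp Require Import all_boot all_fingroup all_solvable zify.
Set Implicit Arguments. Unset Strict Implicit. Unset Printing Implicit Defensive.

Module M_C1.
Import GroupScope.

Section CF.
Variable gT : finGroupType.
Implicit Types G H : {group gT}.

Definition fo G (s : seq {group gT}) : seq nat :=
  pairmap (fun A B : {group gT} => #|A| %/ #|B|) G s.

Definition cfo G (m : nat) : nat := count_mem m (fo G (xchoose (exists_comps G))).

Definition secord (r : section gT) : nat := #|section_group r|.

Lemma fo_sec G s : comps G s -> map secord (pairmap (@mkSec gT) G s) = fo G s.
Proof.
elim: s G => [|H s IH] G //= cs.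
have mx : maxnormal H G G by case/andP: cs => _ /= /andP[].
rewrite IH; last exact: comps_cons cs.
congr (_ :: _); rewrite /secord /= card_quotient ?normal_norm ?maxnormal_normal //.
by rewrite divgS // (maxnormal_sub mx).
Qed.

Lemma fo_perm G s1 s2 : comps G s1 -> comps G s2 -> perm_eq (fo G s1) (fo G s2).
Proof.
move=> c1 c2; rewrite -(fo_sec c1) -(fo_sec c2).
have := perm_map secord (JordanHolderUniqueness c1 c2).
rewrite /mkfactors -!map_comp.
have E : secord \o (@section_repr gT) =1 secord.
  by move=> r; rewrite /= /secord (card_isog (section_reprP r)).
by rewrite !(eq_map E).
Qed.

Lemma cfo_comps G s m : comps G s -> cfo G m = count_mem m (fo G s).
Proof.
move=> cs; apply/seq.permP; apply: fo_perm => //; exact: xchooseP (exists_comps G).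
Qed.

End CF.

End M_C1.
Import M_C1.

Module M_C2.
Import GroupScope.

Lemma comps_subs (gT : finGroupType) (G : {group gT}) s :
  comps G s -> all (fun K : {group gT} => K \subset G) s.
Proof.
elim: s G => [|H s IH] G //= cs.
have mx : maxnormal H G G by case/andP: cs => _ /= /andP[].
have sHG := maxnormal_sub mx.
rewrite sHG /=; apply/allP => K /(allP (IH _ (comps_cons cs))) sKH.
exact: subset_trans sKH sHG.
Qed.

Lemma comps_injm (gT rT : finGroupType) (D : {group gT}) (f : {morphism D >-> rT})
   (injf : 'injm f) (G : {group gT}) s : G \subset D -> comps G s ->
  comps (f @* G)%G [seq (f @* K)%G | K <- s] /\
  fo (f @* G)%G [seq (f @* K)%G | K <- s] = fo G s.
Proof.
elim: s G => [|H s IH] G dG cs.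
  split=> //; case/andP: cs => /= /eqP G1 _; rewrite /comps /= andbT.
  apply/eqP/val_inj => /=; by rewrite G1 /= morphim1.
have mx : maxnormal H G G by case/andP: cs => _ /= /andP[].
have sHG := maxnormal_sub mx.
have dH := subset_trans sHG dG.
have [c2 e2] := IH H dH (comps_cons cs).
split; last by rewrite /= e2 !card_injm.
case/andP: c2 => l2 p2; rewrite /comps /= l2 /= p2 andbT.
by rewrite injm_maxnormal.
Qed.

Lemma cfo_isog (gT rT : finGroupType) (G : {group gT}) (H : {group rT}) m :
  G \isog H -> cfo G m = cfo H m.
Proof.
case/isogP => f injf fGH.
have -> : H = (f @* G)%G by apply/val_inj; rewrite /= fGH.
have [s cs] := exists_comps G.
have [c2 e2] := comps_injm injf (subxx G) cs.
by rewrite (cfo_comps m cs) (cfo_comps m c2) e2.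
Qed.

End M_C2.
Import M_C2.

Module M_C3.
Import GroupScope.

Lemma comps_lift (gT : finGroupType) (N : {group gT}) (sN : seq {group gT})
  (Q : {group coset_of N}) (sb : seq {group coset_of N}) :
  comps N sN -> comps Q sb ->
  comps (coset N @*^-1 Q)%G ([seq (coset N @*^-1 K)%G | K <- sb] ++ sN) /\
  fo (coset N @*^-1 Q)%G ([seq (coset N @*^-1 K)%G | K <- sb] ++ sN) = fo Q sb ++ fo N sN.
Proof.
move=> cN; elim: sb Q => [|H sb IH] Q cQ.
  have Q1 : Q = 1%G by case/andP: cQ => /= /eqP.
  have -> : (coset N @*^-1 Q)%G = N by apply/val_inj; rewrite /= Q1 cosetpre1.
  by split.
have mx : maxnormal H Q Q by case/andP: cQ => _ /= /andP[].
have [c2 e2] := IH H (comps_cons cQ).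
have nHQ := maxnormal_normal mx.
split; last first.
  rewrite /= e2 !card_cosetpre divnMl //; exact: cardG_gt0.
case/andP: c2 => l2 p2; rewrite /comps /= l2 /= p2 andbT.
have nsNQ : N <| coset N @*^-1 Q.
  by apply: (normalS (sub_cosetpre _) _ (normalG N)); apply: morphpre_sub.
have nsNH : N <| coset N @*^-1 H.
  by apply: (normalS (sub_cosetpre _) _ (normalG N)); apply: morphpre_sub.
have npre : coset N @*^-1 H <| coset N @*^-1 Q by rewrite cosetpre_normal.
rewrite -quotient_simple //.
rewrite -(isog_simple (third_isog (sub_cosetpre _) nsNQ npre)).
rewrite !cosetpreK (_ : (coset N @*^-1 Q / N)%G = Q); last by apply/val_inj; rewrite /= cosetpreK.
by rewrite quotient_simple.
Qed.

Lemma cfo_quo (gT : finGroupType) (G N : {group gT}) m : N <| G ->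
  cfo G m = cfo N m + cfo (G / N)%G m.
Proof.
move=> nsNG.
have [sN cN] := exists_comps N.
have [sb cb] := exists_comps (G / N)%G.
have [c e] := comps_lift cN cb.
have eG : (coset N @*^-1 (G / N))%G = G by apply/val_inj; rewrite /= quotientGK.
rewrite eG in c e.
by rewrite (cfo_comps m c) e count_cat (cfo_comps m cN) (cfo_comps m cb) addnC.
Qed.

End M_C3.
Import M_C3.

Module M_C4.
Import GroupScope.

Lemma cfo_dprod (gT : finGroupType) (G A B : {group gT}) m : A \x B = G ->
  cfo G m = cfo A m + cfo B m.
Proof.
move=> dG; have sdG := dprodWsd dG.
have [nsAG _ _ _ _] := sdprod_context sdG.
by rewrite (cfo_quo m nsAG) (cfo_isog m (sdprod_isog sdG)).
Qed.

Lemma cfo_simple (gT : finGroupType) (G : {group gT}) m : simple G ->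
  cfo G m = (m == #|G|).
Proof.
move=> sG; have cs : comps G [:: 1%G].
  by rewrite /comps eqxx /= andbT -simple_maxnormal.
by rewrite (cfo_comps m cs) /= cards1 divn1 eq_sym addn0.
Qed.

Lemma fo_le (gT : finGroupType) (G : {group gT}) : forall s (A : {group gT}),
  A \subset G -> all (fun K : {group gT} => K \subset G) s ->
  all (fun k => k <= #|G|) (fo A s).
Proof.
elim=> [|H s IH] A sAG //= /andP[sHG al].
rewrite IH // andbT (leq_trans (leq_div _ _)) //; exact: subset_leq_card.
Qed.

Lemma cfo_big (gT : finGroupType) (G : {group gT}) m : #|G| < m -> cfo G m = 0.
Proof.
move=> lt; rewrite /cfo; set s := xchoose _.
have cs : comps G s := xchooseP (exists_comps G).
apply/eqP; rewrite -leqn0 leqNgt -has_count; apply/hasPn => k /(allP (fo_le (subxx G) (comps_subs cs))).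
by move=> le; apply/eqP => ek; move: lt; rewrite -ek ltnNge le.
Qed.

End M_C4.
Import M_C4.

Module M_E.
Import GroupScope.

Lemma cfo_Sym_big (T : finType) m : 4 < #|T| -> 2 < m ->
  cfo ('Sym_T)%G m = (m == #|'Alt_T|).
Proof.
move=> h5 m2.
rewrite (cfo_quo m (Alt_normal T)) (cfo_simple m (simple_Alt5 h5)).
rewrite cfo_big ?addn0 //.
rewrite card_quotient ?Alt_norm // Alt_index //.
by apply: leq_trans h5.
Qed.

Lemma cfo_Sym_small (T : finType) m : #|T|`! < m -> cfo ('Sym_T)%G m = 0.
Proof. by move=> h; rewrite cfo_big // card_Sym. Qed.

Lemma center_Sym3 (T : finType) : 2 < #|T| -> 'Z('Sym_T) = 1.
Proof.
move=> h3; apply/trivgP/subsetP => s /centerP [_ cs]; rewrite inE.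
apply/eqP/permP => x; rewrite perm1; apply/eqP/negPn/negP => sx.
have : ~~ ([set: T] \subset [set x; s x]).
  apply: contraL h3 => /subset_leq_card; rewrite cardsT cards2 => h.
  by rewrite -leqNgt (leq_trans h) //; case: (_ != _).
case/subsetPn => z _; rewrite !inE negb_or => /andP[zx zsx].
have c : commute s (tperm x z) by apply: cs; rewrite inE.
have : tperm x z ^ s = tperm x z by rewrite conjgE -?mulgA -c mulKg.
rewrite tpermJ => /(congr1 (fun p : {perm T} => p (s x))).
rewrite tpermL tpermD 1?eq_sym //; last by rewrite eq_sym.
by move/perm_inj => e; move: zx; rewrite e eqxx.
Qed.

Lemma center_Sym2 (T : finType) : #|T| = 2 -> #|'Z('Sym_T)| = 2.
Proof.
move=> h2; have ab : abelian ('Sym_T).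
  by apply/cyclic_abelian/prime_cyclic; rewrite card_Sym h2.
by rewrite (center_idP ab) card_Sym h2.
Qed.

End M_E.
Import M_E.

Module M_D1.
Import GroupScope.

Section Ext.
Variables (V : finType) (B : {set V}).
Local Notation sB := {x : V | x \in B}.

Definition extf (p : {perm sB}) (x : V) : V :=
  if insub x is Some u then val (p u) else x.

Lemma extf_inj p : injective (extf p).
Proof.
rewrite /extf => x y; case: insubP => [u xB ux|xB]; case: insubP => [w yB wy|yB] //.
- by move/val_inj/perm_inj => uw; rewrite -ux -wy uw.
- by move=> e; move: yB; rewrite -e (valP (p u)).
- by move=> e; move: xB; rewrite e (valP (p w)).
Qed.

Definition ext p : {perm V} := perm (@extf_inj p).

Lemma extE p x : ext p x = extf p x.
Proof. by rewrite permE. Qed.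

Lemma ext_morphic : morphic [set: {perm sB}] ext.
Proof.
apply/morphicP => p q _ _; apply/permP => x; rewrite permM !extE /extf.
case: insubP => [u xB ux|xB]; last by rewrite insubN.
by rewrite permM insubT ?(valP (p u)) //= => h; congr (val (q _)); apply: val_inj.
Qed.

Definition extm := morphm ext_morphic.

Lemma extm_inj : 'injm extm.
Proof.
apply/injmP => p q _ _; rewrite /= !morphmE => e; apply/permP => u.
have := congr1 (fun r : {perm V} => r (val u)) e.
by rewrite !extE /extf valK => /val_inj.
Qed.

Lemma ext_on p : @perm_on V B (ext p).
Proof.
apply/subsetP => x; rewrite inE extE /extf; case: insubP => [u -> //|xB].
by rewrite eqxx.
Qed.

Lemma extm_im : extm @* [set: {perm sB}] = perm.Sym B.
Proof.
apply/setP => s; apply/idP/idP.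
  by case/morphimP => p _ _ ->; rewrite inE /= morphmE ext_on.
rewrite inE => sB'.
have cl (u : sB) : s (val u) \in B by rewrite (perm_closed _ sB') (valP u).
pose g (u : sB) : sB := Sub (s (val u)) (cl u).
have ginj : injective g by move=> u w /(congr1 val) /= /perm_inj /val_inj.
apply/morphimP; exists (perm ginj) => //.
apply/permP => x; rewrite /= morphmE extE /extf.
case: insubP => [u xB ux|xB]; first by rewrite permE /= ux.
by rewrite (out_perm sB').
Qed.

Lemma Sym_sub_isog : [set: {perm sB}] \isog perm.Sym B.
Proof.
apply/isogP; exists extm; first exact: extm_inj.
by rewrite extm_im.
Qed.

Lemma card_sB : #|{: sB}| = #|B|.
Proof. by rewrite card_sig. Qed.
End Ext.

Lemma isog_card_center (gT rT : finGroupType) (G : {group gT}) (H : {group rT}) :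
  G \isog H -> #|'Z(G)| = #|'Z(H)|.
Proof.
case/isogP => f injf fG.
by rewrite -fG -injm_center // card_injm // subsetIl.
Qed.

End M_D1.
Import M_D1.

Module M_D2.
Import GroupScope.

Lemma fact_inj a b : 0 < a -> 0 < b -> a`! = b`! -> a = b.
Proof.
move=> a0 b0 e; apply/eqP; rewrite eqn_leq.
by rewrite -(@leq_pfact a b) // -(@leq_pfact b a) // e !leqnn.
Qed.

Lemma half_fact_ge b : 4 < b -> 60 <= b`! %/ 2.
Proof.
move=> h; rewrite leq_divRL //; apply: leq_trans (leq_fact h).
by [].
Qed.

Section Blk.
Variables (V : finType) (B : {set V}).

Lemma cfo_SymB b : 4 < b -> 1 < #|B| ->
  cfo (perm.Sym B)%G (b`! %/ 2) = (#|B| == b).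
Proof.
move=> b5 a2.
have iso := Sym_sub_isog B.
rewrite -(cfo_isog _ (G := [set: {perm {x : V | x \in B}}]%G)) //.
have eS : [set: {perm {x : V | x \in B}}]%G = ('Sym_{x : V | x \in B})%G by apply/val_inj.
rewrite eS.
have m60 := half_fact_ge b5.
case: (leqP #|B| 4) => a4.
  rewrite cfo_Sym_small; last first.
    rewrite card_sB; apply: leq_ltn_trans (leq_fact a4) _.
    by apply: leq_trans m60.
  have : #|B| != b by apply: contraTneq a4 => ->; rewrite -ltnNge.
  by move/negbTE => ->.
rewrite cfo_Sym_big ?card_sB //; last by apply: leq_trans m60.
have := card_Alt (T := {x : V | x \in B}); rewrite card_sB => /(_ a2) hA.
congr (nat_of_bool _); apply/eqP/eqP => [e|e2].
  apply/esym/fact_inj; [by apply: leq_trans b5|by apply: ltnW (leq_ltn_trans _ a4)|].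
  rewrite -hA -e mulnC divnK //.
  by rewrite dvdn_fact // (leq_trans _ b5).
by rewrite -e2 -hA mulKn.
Qed.

Lemma card_center_SymB : 1 < #|B| -> #|'Z(perm.Sym B)| = (if #|B| == 2 then 2 else 1)%N.
Proof.
move=> a2.
rewrite -(isog_card_center (G := [set: {perm {x : V | x \in B}}]%G)); last exact: Sym_sub_isog.
have eS : [set: {perm {x : V | x \in B}}]%G = ('Sym_{x : V | x \in B})%G by apply/val_inj.
rewrite eS; case: eqP => [e|ne].
  by rewrite center_Sym2 // card_sB.
rewrite center_Sym3 ?cards1 // card_sB ltn_neqAle a2 andbT eq_sym.
by apply/eqP.
Qed.
End Blk.

End M_D2.
Import M_D2.

Module M_D3.
Import GroupScope.

Section CoxDec.
Variables (m t : nat) (lab : 'I_m -> 'I_t).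
Local Notation V := (KVert m t).

Definition blk (v : KVert m t) : 'I_t := match v with inl i => lab i | inr j => j end.
Definition Bk (j : 'I_t) : {set (KVert m t)} := [set v | blk v == j].
Definition UJ (J : {set 'I_t}) : {set (KVert m t)} := [set v | blk v \in J].
Definition bpres (s : {perm (KVert m t)}) := [forall v, blk (s v) == blk v].
Definition BPs (J : {set 'I_t}) : {set {perm (KVert m t)}} := [set s : {perm (KVert m t)} | perm_on (UJ J) s && bpres s].

Lemma bpresP (s : {perm (KVert m t)}) : reflect (forall v, blk (s v) = blk v) (bpres s).
Proof. by apply: (iffP forallP) => h v; apply/eqP. Qed.

Lemma BPs_group_set J : group_set (BPs J).
Proof.
apply/group_setP; split.
  by rewrite inE perm_on1; apply/bpresP => v; rewrite perm1.
move=> s u; rewrite !inE => /andP[ps bs] /andP[pu bu].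
rewrite perm_onM //; apply/bpresP => v.
by rewrite permM (bpresP _ bu) (bpresP _ bs).
Qed.
Canonical BP J := Group (BPs_group_set J).

Lemma Sym_sub_BP j (J : {set 'I_t}) : perm.Sym (Bk j) \subset BPs (j |: J).
Proof.
apply/subsetP => u; rewrite !inE => pu; apply/andP; split.
  apply: subset_trans pu _; apply/subsetP => v; rewrite !inE => /eqP ->.
  by rewrite eqxx.
apply/bpresP => v; have [vB|vB] := boolP (v \in Bk j).
  have h1 : u v \in Bk j by rewrite (perm_closed _ pu).
  by move: h1 vB; rewrite !inE => /eqP -> /eqP ->.
by rewrite (out_perm pu vB).
Qed.

Lemma BP_sub j (J : {set 'I_t}) : BPs J \subset BPs (j |: J).
Proof.
apply/subsetP => u; rewrite !inE => /andP[pu ->]; rewrite andbT.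
apply: subset_trans pu _; apply/subsetP => v; rewrite !inE => ->.
by rewrite orbT.
Qed.

Lemma BP_dprod j (J : {set 'I_t}) : j \notin J -> perm.Sym (Bk j) \x BPs J = BPs (j |: J).
Proof.
move=> jJ.
have dis : [disjoint UJ J & Bk j].
  rewrite -setI_eq0; apply/eqP/setP => v; rewrite !inE.
  by apply/andP => -[vJ /eqP e]; move: jJ; rewrite -e vJ.
rewrite dprodE.
- apply/eqP; rewrite eqEsubset mul_subG ?Sym_sub_BP ?BP_sub //=.
  apply/subsetP => s; rewrite inE => /andP[ps /bpresP bs].
  pose f1 v := if blk v == j then s v else v.
  have f1inj : injective f1.
    move=> x y; rewrite /f1; case: ifP => hx; case: ifP => hy.
    - exact: perm_inj.
    - by move=> e; move: hy; rewrite -e bs hx.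
    - by move=> e; move: hx; rewrite e bs hy.
    - by [].
  pose s1 := perm f1inj.
  have s1S : s1 \in perm.Sym (Bk j).
    rewrite inE; apply/subsetP => v; rewrite !inE permE /f1.
    by case: ifP => // _; rewrite eqxx.
  rewrite -(mulKVg s1 s); apply: mem_mulg => //.
  have s1B : s1 \in BP (j |: J) by apply: (subsetP (Sym_sub_BP j J)).
  have sB : s \in BP (j |: J) by rewrite inE ps; apply/bpresP.
  have s2B : s1^-1 * s \in BP (j |: J) by rewrite groupM ?groupV.
  move: s2B; rewrite !inE => /andP[_ ->]; rewrite andbT.
  apply/subsetP => x; rewrite !inE => hx; apply/negPn/negP => xJ.
  move: hx; rewrite permM.
  have [ej|nej] := eqVneq (blk x) j.
    set y := s1^-1 x.
    have s1y : s1 y = x by rewrite /y permKV.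
    have by_ : blk y = j.
      move: s1y; rewrite permE /f1; case: ifP => [/eqP //|_ ->]; by [].
    by move: s1y; rewrite permE /f1 by_ eqxx => ->; rewrite eqxx.
  have s1x : s1^-1 x = x.
    by apply: (canLR (permK s1)); rewrite permE /f1 (negbTE nej).
  rewrite s1x (out_perm ps) ?eqxx //.
  by rewrite !inE negb_or nej.
- apply/subsetP => s sJ; apply/centP => u uS.
  move: sJ uS; rewrite !inE => /andP[ps _] pu.
  by apply: perm_onC ps pu dis.
- apply/trivgP/subsetP => s; rewrite !inE => /andP[pu /andP[ps _]].
  apply/eqP/permP => x; rewrite perm1.
  have [xB|xB] := boolP (x \in Bk j); last by rewrite (out_perm pu).
  by apply: (out_perm ps); rewrite (disjointFl dis xB).
Qed.
End CoxDec.

End M_D3.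
Import M_D3.

Module M_D4.
Import GroupScope.

Section CoxEq.
Variables (m t : nat) (lab : 'I_m -> 'I_t).

Lemma tperm_bpres (a b : KVert m t) : blk lab a = blk lab b -> bpres lab (tperm a b).
Proof.
move=> e; apply/bpresP => v; case: tpermP => [->|->|]; by [|rewrite e].
Qed.

Lemma tperm_Cox (v w : KVert m t) : blk lab v = blk lab w -> tperm v w \in Cox lab.
Proof.
move=> e.
have star (x : KVert m t) : tperm x (inr (blk lab x)) \in Cox lab.
  case: x => [i|j] /=; last by rewrite tperm1 group1.
  by apply: mem_gen; apply/imsetP; exists i.
pose c : KVert m t := inr (blk lab w).
have [->|vw] := eqVneq v w; first by rewrite tperm1 group1.
have [vc|nvc] := eqVneq v c; first by rewrite vc tpermC star.
have [wc|nwc] := eqVneq w c; first by rewrite wc /c -e star.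
have := groupJ (star v) (star w); rewrite tpermJ e -/c tpermR tpermD //.
all: by rewrite // eq_sym.
Qed.

Lemma Cox_BP : Cox lab = BPs lab setT :> {set _}.
Proof.
apply/eqP; rewrite eqEsubset; apply/andP; split.
  rewrite /Cox /= gen_subG; apply/subsetP => g /imsetP [i _ ->].
  rewrite inE /gen tperm_bpres // andbT; apply/subsetP => v _; by rewrite inE inE.
apply/subsetP => s; rewrite inE => /andP[_].
have [k] := ubnP #|[set x | s x != x]|; elim: k s => // k IH s lt bs.
have [->|ns] := eqVneq s 1; first exact: group1.
have [v sv] : exists v, s v != v.
  apply/existsP; apply: contraR ns => /existsPn h; apply/eqP/permP => x.
  by rewrite perm1; apply/eqP; move: (h x); rewrite negbK.
set s' := s * tperm (s v) v.
have bv : blk lab (s v) = blk lab v by apply/(bpresP _ _ bs).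
have -> : s = s' * tperm (s v) v by rewrite /s' -mulgA tperm2 mulg1.
rewrite groupM ?tperm_Cox //; apply: IH.
  apply: (@leq_trans #|[set x | s x != x]|); last by rewrite -ltnS.
  apply: proper_card; rewrite properEneq; apply/andP; split.
    apply/eqP => e; have : v \in [set x | s' x != x] by rewrite e inE.
    by rewrite inE /s' permM tpermL eqxx.
  apply/subsetP => x; rewrite !inE; apply: contraNN => /eqP sx; apply/eqP.
  rewrite /s' permM sx tpermD //.
    by apply: contraNneq sv => e; rewrite -(inj_eq (@perm_inj _ s)) e sx.
  by apply: contraNneq sv => ->; rewrite sx.
apply/bpresP => x; rewrite /s' permM.
have := (tperm_bpres bv); move/bpresP => ->; exact/(bpresP _ _ bs).
Qed.

Lemma BP0 : BPs lab set0 = 1.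
Proof.
apply/trivgP/subsetP => s; rewrite inE => /andP[ps _]; rewrite inE.
apply/eqP/permP => x; by rewrite perm1 (out_perm ps) // !inE.
Qed.

Lemma setI_ind (P : {set 'I_t} -> Prop) : P set0 ->
  (forall j (J : {set 'I_t}), j \notin J -> P J -> P (j |: J)) -> forall J, P J.
Proof.
move=> P0 PS J; have [k] := ubnP #|J|; elim: k J => // k IH J lt.
have [->|[j jJ]] := set_0Vmem J; first exact: P0.
rewrite -(setD1K jJ); apply: PS; first by rewrite !inE eqxx.
apply: IH; rewrite -ltnS (leq_trans _ lt) // ltnS.
by rewrite (cardsD1 j J) jJ.
Qed.
End CoxEq.

End M_D4.
Import M_D4.

Module M_D5.
Import GroupScope.

Section Inv.
Variables (m t : nat) (lab : 'I_m -> 'I_t).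

Lemma cfo1 (gT : finGroupType) mm : cfo (1%G : {group gT}) mm = 0.
Proof.
have c : comps (1%G : {group gT}) [::] by rewrite /comps /= eqxx.
by rewrite (cfo_comps mm c).
Qed.

Lemma inv_BP J :
 (forall mm, cfo (BP lab J) mm = \sum_(j in J) cfo (perm.Sym (Bk lab j))%G mm) /\
 #|BP lab J| = (\prod_(j in J) #|Bk lab j|`!)%N /\
 #|'Z(BP lab J)| = (\prod_(j in J) #|'Z(perm.Sym (Bk lab j))|)%N.
Proof.
elim/setI_ind: J => [|j J jJ [IH1 [IH2 IH3]]].
  have e : BP lab set0 = 1%G by apply/val_inj; rewrite /= BP0.
  rewrite e !big_set0 center1 cards1; split => // mm; rewrite big_set0; exact: cfo1.
have d := BP_dprod lab jJ.
split; last split.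
- move=> mm; rewrite big_setU1 //= -IH1.
  by rewrite (cfo_dprod mm (G := BP lab (j |: J)) (A := (perm.Sym (Bk lab j))%G) (B := BP lab J)).
- by rewrite big_setU1 //= -(dprod_card d) perm.card_Sym IH2.
- by rewrite big_setU1 //= -(dprod_card (center_dprod d)) IH3.
Qed.

Lemma Cox_eqBP : Cox lab = BP lab setT.
Proof. by apply/val_inj; rewrite /= -Cox_BP. Qed.

Lemma inv_Cox :
 (forall mm, cfo (Cox lab) mm = \sum_j cfo (perm.Sym (Bk lab j))%G mm) /\
 #|Cox lab| = (\prod_j #|Bk lab j|`!)%N /\
 #|'Z(Cox lab)| = (\prod_j #|'Z(perm.Sym (Bk lab j))|)%N.
Proof.
rewrite Cox_eqBP; have [h1 [h2 h3]] := inv_BP setT.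
split; last split.
- by move=> mm; rewrite h1; apply: eq_bigl => j; rewrite in_setT.
- by rewrite h2; apply: eq_bigl => j; rewrite in_setT.
- by rewrite h3; apply: eq_bigl => j; rewrite in_setT.
Qed.
End Inv.

End M_D5.
Import M_D5.

Module M_F1.

Lemma logn_prod_fact p (I : finType) (a : I -> nat) :
  logn p (\prod_i (a i)`!) = \sum_i logn p ((a i)`!).
Proof.
have : 0 < \prod_i (a i)`! /\ logn p (\prod_i (a i)`!) = \sum_i logn p ((a i)`!).
  apply: (big_rec2 (fun x y => 0 < x /\ logn p x = y)) => [|i x y _ [x0 <-]].
    by rewrite logn1.
  by rewrite muln_gt0 fact_gt0 x0 lognM ?fact_gt0.
by case.
Qed.

Lemma sum_group (I : finType) (a : I -> nat) (g : nat -> nat) M :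
  (forall i, a i < M) ->
  \sum_i g (a i) = \sum_(k < M) (\sum_i (a i == k)) * g k.
Proof.
move=> aM.
rewrite (eq_bigr (fun k : 'I_M => \sum_i (a i == k) * g k)); last by move=> k _; rewrite big_distrl.
rewrite exchange_big /=; apply: eq_bigr => i _.
rewrite (bigD1 (Ordinal (aM i))) //= eqxx mul1n big1 ?addn0 // => k nk.
rewrite (_ : (a i == k) = false) //; apply/negbTE; apply: contra nk => /eqP e.
by apply/eqP/val_inj; rewrite /= e.
Qed.

Lemma prod_pow2 (I : finType) (a : I -> nat) :
  \prod_i (if a i == 2 then 2 else 1) = 2 ^ (\sum_i (a i == 2)).
Proof.
rewrite expn_sum; apply: eq_bigr => i _; by case: (a i == 2).
Qed.

Lemma counts_eq (I J : finType) (a : I -> nat) (b : J -> nat) :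
  (forall i, 1 < a i) -> (forall j, 1 < b j) ->
  (forall k, 4 < k -> \sum_i (a i == k) = \sum_j (b j == k)) ->
  \prod_i (a i)`! = \prod_j (b j)`! ->
  \prod_i (if a i == 2 then 2 else 1) = \prod_j (if b j == 2 then 2 else 1) ->
  forall k, \sum_i (a i == k) = \sum_j (b j == k).
Proof.
move=> a2 b2 I1 I2 I3.
have c2 : \sum_i (a i == 2) = \sum_j (b j == 2).
  by apply/(expnI (m := 2)) => //; rewrite -!prod_pow2.
have c01 k : k < 2 -> \sum_i (a i == k) = 0 /\ \sum_j (b j == k) = 0.
  move=> k2; split; apply: big1 => i _.
    by case: eqP => // e; move: (a2 i); rewrite e ltnNge -ltnS k2.
  by case: eqP => // e; move: (b2 i); rewrite e ltnNge -ltnS k2.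
pose M := (\sum_i a i + \sum_j b j + 4).+1.
have aM i : a i < M.
  have : a i <= \sum_i a i by rewrite (bigD1 i) //= leq_addr.
  rewrite /M; lia.
have bM j : b j < M.
  have : b j <= \sum_j b j by rewrite (bigD1 j) //= leq_addr.
  rewrite /M; lia.
have M5 : 4 < M by rewrite /M; lia.
pose i3 : 'I_M := inord 3.
pose i4 : 'I_M := inord 4.
have v3 : val i3 = 3 by rewrite /= inordK //; lia.
have v4 : val i4 = 4 by rewrite /= inordK //; lia.
have n34 : i4 != i3 by apply/eqP => /(congr1 val); rewrite v3 v4.
have rest k : k != 3 -> k != 4 -> \sum_i (a i == k) = \sum_j (b j == k).
  move=> k3 k4; case: (ltnP k 2) => [k2|k2].
    by have [-> ->] := c01 k k2.
  case: (ltnP 4 k) => [k5|k4']; first exact: I1.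
  have -> : k = 2 by lia.
  exact: c2.
have key p : (\sum_i (a i == 3)) * logn p (3`!) + (\sum_i (a i == 4)) * logn p (4`!) =
             (\sum_j (b j == 3)) * logn p (3`!) + (\sum_j (b j == 4)) * logn p (4`!).
  have := congr1 (logn p) I2; rewrite !logn_prod_fact.
  rewrite (sum_group (fun k => logn p (k`!)) aM) (sum_group (fun k => logn p (k`!)) bM).
  rewrite (bigD1 i3) // (bigD1 i3 (P := xpredT)) //.
  rewrite !(bigD1 i4 (P := fun i : 'I_M => true && (i != i3))) ?n34 //= v3 v4.
  rewrite [X in _ + (_ + X) = _](eq_bigr (fun k : 'I_M => (\sum_j (b j == k)) * logn p (k`!))).
    by rewrite !addnA => /addIn.
  move=> k /andP[k3 k4]; rewrite rest //.
    by apply: contra k3 => /eqP e; apply/eqP/val_inj; rewrite v3.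
  by apply: contra k4 => /eqP e; apply/eqP/val_inj; rewrite v4.
have h2 := key 2; have h3 := key 3.
rewrite (_ : logn 2 (3`!) = 1) // (_ : logn 2 (4`!) = 3) // in h2.
rewrite (_ : logn 3 (3`!) = 1) // (_ : logn 3 (4`!) = 1) // in h3.
move=> k; have [->|k3] := eqVneq k 3; first lia.
have [->|k4] := eqVneq k 4; first lia.
exact: rest.
Qed.

End M_F1.
Import M_F1.

Module M_F2.

Section Fib.
Variables (K : eqType).

Definition fibmap (X Y : finType) (p : X -> K) (q : Y -> K) (y0 : Y) (x : X) : Y :=
  nth y0 (enum [pred y | q y == p x]) (index x (enum [pred x' | p x' == p x])).

Lemma fibmap_spec (X Y : finType) (p : X -> K) (q : Y -> K) (x0 : X) (y0 : Y) :
  (forall k, #|[pred x | p x == k]| = #|[pred y | q y == k]|) ->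
  forall x, q (fibmap p q y0 x) = p x /\ fibmap q p x0 (fibmap p q y0 x) = x.
Proof.
move=> h x.
have xin : x \in enum [pred x' | p x' == p x] by rewrite mem_enum inE.
have ilt : index x (enum [pred x' | p x' == p x]) < size (enum [pred y | q y == p x]).
  by rewrite -!cardE -h cardE index_mem.
have fin : fibmap p q y0 x \in enum [pred y | q y == p x] by rewrite mem_nth.
have qf : q (fibmap p q y0 x) = p x by move: fin; rewrite mem_enum inE => /eqP.
split => //.
rewrite /fibmap qf index_uniq ?enum_uniq //.
by rewrite nth_index.
Qed.

Lemma fiber_bij (X Y : finType) (p : X -> K) (q : Y -> K) (x0 : X) (y0 : Y) :
  (forall k, #|[pred x | p x == k]| = #|[pred y | q y == k]|) ->
  exists f : X -> Y, bijective f /\ forall x, q (f x) = p x.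
Proof.
move=> h; exists (fibmap p q y0); split; last by move=> x; case: (fibmap_spec x0 y0 h x).
exists (fibmap q p x0) => [x|y]; first by case: (fibmap_spec x0 y0 h x).
by case: (fibmap_spec y0 x0 (fun k => esym (h k)) y).
Qed.
End Fib.

End M_F2.
Import M_F2.

Module M_F3.

Section Face.
Variables (m t : nat) (lab : 'I_m -> 'I_t).

Lemma face_char (S : {set KVert m t}) :
  is_face lab S = (S != set0) && [forall j, ~~ (Bk lab j \subset S)].
Proof.
rewrite /is_face; case: (S != set0) => //=; apply/existsP/forallP.
  case=> F /andP[/existsP[c /andP[injc /eqP eF]] sSF] j; apply/negP => sBS.
  have hF v : v \in Bk lab j -> v \in F by move=> vB; apply: (subsetP sSF); apply: (subsetP sBS).
  have : inr j \in F by apply: hF; rewrite inE.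
  rewrite eF => /imsetP[i _]; rewrite /yvert; case ci: (c i) => // -[ji].
  have : inl i \in F by apply: hF; rewrite inE /= ji.
  rewrite eF => /imsetP[i' _]; rewrite /yvert; case ci': (c i') => // -[ii'].
  by move: ci; rewrite ii' ci'.
move=> hS.
pose u j := odflt (inr j) [pick v | (v \in Bk lab j) && (v \notin S)].
have uP j : u j \in Bk lab j /\ u j \notin S.
  rewrite /u; case: pickP => [v /andP[-> ->] //|none].
  have := hS j; move/negP; case; apply/subsetP => v vB.
  by have := none v; rewrite vB /= => /negbFE.
pose c := [ffun i => u (lab i) == inl i].
exists [set yvert lab c i | i : 'I_m]; apply/andP; split.
  apply/existsP; exists c; rewrite eqxx andbT; apply/injectiveP => i1 i2.
  rewrite /yvert !ffunE.
  case: eqP => [e1|_]; case: eqP => [e2|_] //.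
  - by case=> e; move: e1; rewrite e e2 => -[].
  - by case.
apply/subsetP => v vS; apply/imsetP; case: v vS => [i|j] vS.
  exists i => //; rewrite /yvert ffunE; case: eqP => // e.
  by have [_] := uP (lab i); rewrite e vS.
have [uB uS] := uP j.
move: uB uS; rewrite inE; case E: (u j) => [i|j'] /=.
  by move=> /eqP li _; exists i => //; rewrite /yvert ffunE li E eqxx.
by move=> /eqP ej; rewrite ej vS.
Qed.

Lemma Bk_ne j : (exists i, lab i = j) -> 1 < #|Bk lab j|.
Proof.
case=> i li.
have : [set inl i; inr j] \subset Bk lab j.
  by apply/subsetP => v; rewrite !inE => /orP[] /eqP -> /=; rewrite ?li.
by move/subset_leq_card; rewrite cards2.
Qed.
End Face.

Lemma complex_iso_of m t m' t' (lab : 'I_m -> 'I_t) (lab' : 'I_m' -> 'I_t')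
  (f : KVert m t -> KVert m' t') (g : 'I_t -> 'I_t') :
  bijective f -> bijective g -> (forall v, blk lab' (f v) = g (blk lab v)) ->
  complex_iso lab lab'.
Proof.
move=> bf bg hf; exists f; split => // S.
have injf := bij_inj bf; have injg := bij_inj bg.
have eB j : f @: Bk lab j = Bk lab' (g j).
  apply/setP => w; case: bf => fi fK Kf.
  rewrite -(Kf w) (mem_imset _ _ injf) !inE hf.
  by rewrite (inj_eq injg).
have sub j : (Bk lab j \subset S) = (Bk lab' (g j) \subset f @: S).
  by rewrite -eB; apply/idP/idP => [/imsetS //|/subsetP h]; apply/subsetP => v vB;
     have := h (f v) (imset_f _ vB); rewrite (mem_imset _ _ injf).
rewrite !face_char imset_eq0; congr (_ && _).
apply/forallP/forallP => h j.
  by case: bg => gi gK Kg; rewrite -(Kg j) -sub.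
by rewrite sub.
Qed.



End M_F3.
Import M_F3.

Module M_G.
Import GroupScope.

Lemma card_sum (I : finType) (P : pred I) : #|[pred i | P i]| = \sum_i (P i : nat).
Proof.
rewrite -sum1_card big_mkcond /=; apply: eq_bigr => i _.
by rewrite !inE; case: (P i).
Qed.

End M_G.
Import M_G.

Theorem proposition2p9 (n n' t t' : nat)
  (lab : 'I_n.+1 -> 'I_t) (lab' : 'I_n'.+1 -> 'I_t') :
  2 <= n -> 2 <= n' ->
  is_partition_lab lab -> is_partition_lab lab' ->
  (Cox lab \isog Cox lab') ->
  complex_iso lab lab'.
Proof.
move=> _ _ hP hP' iso.
pose a j := #|Bk lab j|; pose a' j := #|Bk lab' j|.
have [cf [cc cz]] := inv_Cox lab.
have [cf' [cc' cz']] := inv_Cox lab'.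
have a2 j : 1 < a j by apply: Bk_ne; exact: hP.
have a2' j : 1 < a' j by apply: Bk_ne; exact: hP'.
have I1 k : 4 < k -> \sum_j (a j == k) = \sum_j (a' j == k).
  move=> k4; have := cfo_isog (k`! %/ 2) iso; rewrite cf cf'.
  rewrite (eq_bigr (fun j => (a j == k) : nat)); last by move=> j _; rewrite cfo_SymB //; apply: a2.
  by rewrite (eq_bigr (fun j => (a' j == k) : nat)) // => j _; rewrite cfo_SymB //; apply: a2'.
have I2 : (\prod_j (a j)`! = \prod_j (a' j)`!)%N.
  by have := card_isog iso; rewrite cc cc'.
have I3 : (\prod_j (if a j == 2 then 2 else 1) = \prod_j (if a' j == 2 then 2 else 1))%N.
  have := isog_card_center iso; rewrite cz cz'.
  rewrite (eq_bigr (fun j => (if a j == 2 then 2 else 1)%N)); last by move=> j _; rewrite card_center_SymB //; apply: a2.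
  by rewrite (eq_bigr (fun j => (if a' j == 2 then 2 else 1)%N)) // => j _; rewrite card_center_SymB //; apply: a2'.
have cnt := counts_eq a2 a2' I1 I2 I3.
have [g [bg hg]] : exists g : 'I_t -> 'I_t', bijective g /\ forall j, a' (g j) = a j.
  apply: (fiber_bij (lab ord0) (lab' ord0)) => k.
  by rewrite !card_sum cnt.
have injg := bij_inj bg.
have [f [bf hf]] : exists f : KVert n.+1 t -> KVert n'.+1 t',
    bijective f /\ forall v, blk lab' (f v) = g (blk lab v).
  apply: (fiber_bij (inl ord0) (inl ord0)) => k.
  case: bg => gi gK Kg.
  have e1 : #|[pred v | g (blk lab v) == k]| = a (gi k).
    apply: eq_card => v; rewrite !inE -{1}(Kg k) (inj_eq injg).
    by [].
  have e2 : #|[pred w | blk lab' w == k]| = a' k by apply: eq_card => w; rewrite !inE.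
  by rewrite e1 e2 -hg Kg.
exact: complex_iso_of bf bg hf.
Qed.
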